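(* $L^\infty(\mathbb R^n)\cap{\rm BMO}^\Phi(\mathbb R^n)=L^\infty(\mathbb R^n)\cap{\rm bmo}^\Phi(\mathbb R^n)$; equivalently, $L^\infty(\mathbb R^n)\cap(H^\Phi_*(\mathbb R^n))^*=L^\infty(\mathbb R^n)\cap{\rm bmo}^\Phi(\mathbb R^n)$.
   Context: $\Phi(\tau):=\tau/\log(e+\tau)$. ${\rm BMO}^\Phi(\mathbb R^n)$ is the set of $f\in L^1_{\rm loc}$ with $\|f\|_{{\rm BMO}^\Phi}:=\sup_B\frac{\log(e+1/|B|)}{|B|}\int_B|f-f_B|\,dx<\infty$ (sup over all balls; $f_B$ the mean of $f$ on $B$). ${\rm bmo}^\Phi(\mathbb R^n)$ is the set of $f\in L^1_{\rm loc}$ with $\sup_{B:|B|<1}\frac{\log(e+1/|B|)}{|B|}\int_B|f-f_B|+\sup_{B:|B|\ge1}\frac{\log(e+1/|B|)}{|B|}\int_B|f|<\infty$. ${\rm BMO}^\Phi(\mathbb R^n)$ is the dual of the variant Orlicz Hardy space $H^\Phi_*(\mathbb R^n):=\{f\in\mathcal S':\sum_{k\in\mathbb Z^n}\|M(f,\varphi)\mathbf 1_{k+[0,1)^n}\|_{L^\Phi}<\infty\}$, where $M(f,\varphi)(x)=\sup_{s>0}|f*\varphi_s(x)|$ for a fixed $\varphi\in\mathcal S$ with $\int\varphi\ne0$ and $\|h\|_{L^\Phi}:=\inf\{\lambda>0:\int\Phi(|h|/\lambda)\le1\}$. *)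

(* Defs.v *)
From HB Require Import structures.
From mathcomp Require Import all_boot all_order all_algebra.
From mathcomp Require Import all_classical all_reals all_analysis.
Set Implicit Arguments. Unset Strict Implicit. Unset Printing Implicit Defensive.
Import Order.TTheory GRing.Theory Num.Theory.
Local Open Scope classical_set_scope.
Local Open Scope ring_scope.

(* R^n is modelled as n.-tuple R with its product (Borel) sigma-algebra. *)
Notation Rn R n := (n.-tuple R).

(* mu is Lebesgue measure on R^n: it gives every half-open box its volume.
   (This determines mu uniquely on the Borel sets.) *)
Definition is_lebesgue {R : realType} (n : nat)
  (mu : {measure set (Rn R n) -> \bar R}) : Prop :=
  forall a b : Rn R n, (forall i, tnth a i <= tnth b i) ->
    mu [set x | forall i, tnth a i < tnth x i <= tnth b i]
    = (\prod_(i < n) (tnth b i - tnth a i))%:E.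

Definition eball {R : realType} (n : nat) (c : Rn R n) (r : R) : set (Rn R n) :=
  [set y | \sum_(i < n) (tnth y i - tnth c i) ^+ 2 < r ^+ 2].

Section Defs.
Context {R : realType} (n : nat) (mu : {measure set (Rn R n) -> \bar R}).

Definition bvol (B : set (Rn R n)) : R := fine (mu B).

Definition bint (B : set (Rn R n)) (g : Rn R n -> R) : R :=
  fine (\int[mu]_(y in B) (g y)%:E)%E.

Definition bmean (B : set (Rn R n)) (f : Rn R n -> R) : R :=
  bint B f / bvol B.

Definition wgt (B : set (Rn R n)) : R :=
  ln (expR 1 + (bvol B)^-1) / bvol B.

Definition L1loc (f : Rn R n -> R) : Prop :=
  measurable_fun [set: Rn R n] f /\
  forall c r, 0 < r -> mu.-integrable (eball c r) (fun y => (f y)%:E).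

Definition Linfty (f : Rn R n -> R) : Prop :=
  measurable_fun [set: Rn R n] f /\
  exists M : R, {ae mu, forall x, `|f x| <= M}.

Definition BMOPhi (f : Rn R n -> R) : Prop :=
  L1loc f /\
  exists C : R, forall c r, 0 < r ->
    wgt (eball c r) * bint (eball c r) (fun y => `|f y - bmean (eball c r) f|)
      <= C.

Definition bmoPhi (f : Rn R n -> R) : Prop :=
  L1loc f /\
  exists C : R,
    (forall c r, 0 < r -> bvol (eball c r) < 1 ->
      wgt (eball c r) * bint (eball c r) (fun y => `|f y - bmean (eball c r) f|)
        <= C) /\
    (forall c r, 0 < r -> 1 <= bvol (eball c r) ->
      wgt (eball c r) * bint (eball c r) (fun y => `|f y|) <= C).

End Defs.

(* Main.v *)
Require Import Defs.
From HB Require Import structures.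
From mathcomp Require Import all_boot all_order all_algebra.
From mathcomp Require Import all_classical all_reals all_analysis.
From mathcomp Require Import lra.
Import Order.TTheory GRing.Theory Num.Theory.
Local Open Scope classical_set_scope.
Local Open Scope ring_scope.

Section Helpers.
Context {R : realType} (n : nat) (mu : {measure set (n.-tuple R) -> \bar R}).

Lemma meas_eball (c : n.-tuple R) (r : R) : measurable (eball c r).
Proof.
set g := fun y : n.-tuple R => \sum_(i < n) (tnth y i - tnth c i) ^+ 2.
have mg : measurable_fun setT g.
  apply: measurable_sum => i; apply: measurable_realfun.measurable_funX.
  apply: measurable_realfun.measurable_funB => //; exact: measurable_tnth.
have -> : eball c r = setT `&` g @^-1` `]-oo, r ^+ 2[%classic.
  by apply/seteqP; split => y; rewrite /= in_itv /=; [move=> h; split|case].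
exact: mg.
Qed.

Lemma int_abs_le (B : set (n.-tuple R)) (g : n.-tuple R -> R) (K : R) :
  measurable B -> measurable_fun B g -> 0 <= K ->
  mu B = (bvol mu B)%:E ->
  {ae mu, forall x, B x -> `|g x| <= K} ->
  bint mu B (fun y => `|g y|) <= K * bvol mu B.
Proof.
move=> mB mg K0 muB ae.
have v0 : 0 <= bvol mu B by rewrite -lee_fin -muB.
have H : (\int[mu]_(y in B) (`|g y|)%:E <= (K * bvol mu B)%:E)%E.
  have H1 : (\int[mu]_(y in B) (`|g y|)%:E <= \int[mu]_(y in B) (cst K%:E) y)%E.
    apply: ae_ge0_le_integral => //.
    apply/measurable_realfun.measurable_EFinP; exact: measurableT_comp.
  by rewrite integral_cst // muB in H1.
rewrite /bint; move: H; case: (\int[mu]_(y in B) _)%E => [r||] //=;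
  by [rewrite lee_fin | move=> _; rewrite mulr_ge0].
Qed.

Lemma bint_abs_le (B : set (n.-tuple R)) (g : n.-tuple R -> R) (K : R) :
  measurable B -> measurable_fun B g -> 0 <= K ->
  mu B = (bvol mu B)%:E ->
  {ae mu, forall x, B x -> `|g x| <= K} ->
  `|bint mu B g| <= K * bvol mu B.
Proof.
move=> mB mg K0 muB ae.
have v0 : 0 <= bvol mu B by rewrite -lee_fin -muB.
have H : (\int[mu]_(y in B) (`|g y|)%:E <= (K * bvol mu B)%:E)%E.
  have H1 : (\int[mu]_(y in B) (`|g y|)%:E <= \int[mu]_(y in B) (cst K%:E) y)%E.
    apply: ae_ge0_le_integral => //.
    apply/measurable_realfun.measurable_EFinP; exact: measurableT_comp.
  by rewrite integral_cst // muB in H1.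
have H2 := @le_abse_integral _ _ _ mu B (fun y => (g y)%:E) mB
  (proj2 (measurable_realfun.measurable_EFinP _ _) mg).
rewrite /bint; move: H2; case: (\int[mu]_(y in B) _)%E => [r||] //=.
- move=> h; rewrite -lee_fin; apply: le_trans H.
  under eq_integral => x _ do rewrite -abse_EFin.
  exact: h.
- by move=> _; rewrite normr0 mulr_ge0.
- by move=> _; rewrite normr0 mulr_ge0.
Qed.

Lemma large_bound (B : set (n.-tuple R)) (g : n.-tuple R -> R) (K : R) :
  measurable B -> measurable_fun B g -> 0 <= K -> 1 <= bvol mu B ->
  {ae mu, forall x, B x -> `|g x| <= K} ->
  wgt mu B * bint mu B (fun y => `|g y|) <= K * ln (expR 1 + 1).
Proof.
move=> mB mg K0 v1 ae.
have muB : mu B = (bvol mu B)%:E.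
  move: (v1); rewrite /bvol; case: (mu B) => [r||] //=; by rewrite ler10.
have v0 : 0 < bvol mu B by apply: lt_le_trans v1.
have e1 : 1 <= expR 1 + (bvol mu B)^-1.
  have h1 : 1 <= expR (1:R) by rewrite -expR0 ler_expR.
  by apply: (le_trans h1); rewrite lerDl invr_ge0 ltW.
have w0 : 0 <= wgt mu B by rewrite /wgt divr_ge0 ?ln_ge0 // ltW.
apply: (le_trans (ler_wpM2l w0 (int_abs_le B g K mB mg K0 muB ae))).
rewrite /wgt mulrCA divfK ?gt_eqF //.
apply: ler_wpM2l => //.
rewrite ler_ln ?posrE; last 2 first.
- by apply: lt_le_trans e1.
- by rewrite addr_gt0 ?expR_gt0.
by rewrite lerD2l invr_le1 // unitfE gt_eqF.
Qed.

End Helpers.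

Lemma bvol_fin {R : realType} (n : nat) (mu : {measure set (n.-tuple R) -> \bar R})
  (B : set (n.-tuple R)) : 1 <= bvol mu B -> mu B = (bvol mu B)%:E.
Proof.
move=> v1; move: (v1); rewrite /bvol; case: (mu B) => [r||] //=; by rewrite ler10.
Qed.

Lemma ln_e1_ge0 {R : realType} : 0 <= ln (expR (1:R) + 1).
Proof.
apply: ln_ge0; have h1 : 1 <= expR (1:R) by rewrite -expR0 ler_expR.
by apply: (le_trans h1); rewrite lerDl.
Qed.

Theorem lemma4p40 (R : realType) (n : nat) (hn : (0 < n)%N)
  (mu : {measure set (n.-tuple R) -> \bar R}) (hmu : is_lebesgue mu)
  (f : n.-tuple R -> R) :
  Linfty mu f -> (BMOPhi mu f <-> bmoPhi mu f).
Proof.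
move=> [mf [M aeM]].
set K := `|M|.
have K0 : 0 <= K by exact: normr_ge0.
have aeK : {ae mu, forall x, `|f x| <= K}.
  by move: aeM; apply: filterS => x h; apply: le_trans h (ler_norm _).
have mfB : forall B : set (n.-tuple R), measurable_fun B f.
  by move=> B; apply: (measurable_funS measurableT (subsetT _) mf).
have aeB : forall B : set (n.-tuple R), {ae mu, forall x, B x -> `|f x| <= K}.
  by move=> B; move: aeK; apply: filterS => x h _.
split.
- case=> [L1 [C hC]]; split => //.
  exists (Num.max C (K * ln (expR 1 + 1))); split.
  + move=> c r r0 _; apply: le_trans (hC c r r0) _; by rewrite le_max lexx.
  + move=> c r r0 v1.
    apply: le_trans (@large_bound R n mu _ f K (@meas_eball R n c r) (mfB _) K0 v1 (aeB _)) _.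
    by rewrite le_max lexx orbT.
- case=> [L1 [C [hC1 hC2]]]; split => //.
  exists (Num.max C (2 * K * ln (expR 1 + 1))) => c r r0.
  have [v1|v1] := ltP (bvol mu (eball c r)) 1.
    by apply: le_trans (hC1 c r r0 v1) _; rewrite le_max lexx.
  set B := eball c r.
  have mB : measurable B := @meas_eball R n c r.
  have muB : mu B = (bvol mu B)%:E := bvol_fin n mu B v1.
  have vp : 0 < bvol mu B by apply: lt_le_trans v1.
  set m := bmean mu B f.
  have hm : `|m| <= K.
    rewrite /m /bmean normrM normfV (gtr0_norm vp) ler_pdivrMr //.
    exact: (@bint_abs_le R n mu B f K mB (mfB _) K0 muB (aeB _)).
  have mg : measurable_fun B (fun y => f y - m).
    apply: measurable_realfun.measurable_funB => //.
  have aeg : {ae mu, forall x, B x -> `|f x - m| <= K + `|m|}.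
    move: (aeB B); apply: filterS => x h Bx.
    by apply: le_trans (ler_normB _ _) _; rewrite lerD2r h.
  apply: le_trans (@large_bound R n mu B (fun y => f y - m) (K + `|m|) mB mg _ v1 aeg) _.
    by rewrite addr_ge0.
  rewrite le_max; apply/orP; right.
  apply: ler_wpM2r; first exact: ln_e1_ge0.
  lra.
Qed.
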